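(* Let $q\ge 7$ and $s\in[1,7]$ be integers, $C$ a finite set with $|C|=2q+s$, and $M\in\mathcal M(6,q,C)$. If $\{i,k\}\subseteq\{1,\dots,6\}$ with $i\ne k$ and $r(i,k)\ge 1$, then $r(i,k)+r_{3+}(i,k)\le 8-s$.
   Context: $\mathcal M(6,q,C)$ is the set of $6\times q$ matrices $M$ with entries from $C$ such that each row has $q$ pairwise distinct entries, each column has $6$ pairwise distinct entries, and every pair of distinct colours of $C$ appears together in some row or some column of $M$. The frequency of a colour is the number of entries of $M$ equal to it. For rows $i\ne k$, $r(i,k)$ is the number of colours of frequency exactly $2$ appearing in both row $i$ and row $k$, and $r_{3+}(i,k)$ is the number of colours of frequency at least $3$ appearing in both row $i$ and row $k$. *)

(* Defs.v *)
From mathcomp Require Import all_boot all_order all_algebra.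
Set Implicit Arguments. Unset Strict Implicit. Unset Printing Implicit Defensive.

Section Defs.
Variables (C : finType) (q : nat).

Definition in_M (M : 'M[C]_(6, q)) : Prop :=
  (forall i : 'I_6, injective (fun j : 'I_q => M i j)) /\
  (forall j : 'I_q, injective (fun i : 'I_6 => M i j)) /\
  (forall c d : C, c != d ->
     (exists i : 'I_6, exists j1 j2 : 'I_q, M i j1 = c /\ M i j2 = d) \/
     (exists j : 'I_q, exists i1 i2 : 'I_6, M i1 j = c /\ M i2 j = d)).

Definition freq (M : 'M[C]_(6, q)) (c : C) : nat :=
  #|[set ij : 'I_6 * 'I_q | M ij.1 ij.2 == c]|.

Definition in_row (M : 'M[C]_(6, q)) (i : 'I_6) (c : C) : bool :=
  [exists j : 'I_q, M i j == c].

Definition r (M : 'M[C]_(6, q)) (i k : 'I_6) : nat :=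
  #|[set c : C | (freq M c == 2) && in_row M i c && in_row M k c]|.

Definition r3 (M : 'M[C]_(6, q)) (i k : 'I_6) : nat :=
  #|[set c : C | (3 <= freq M c) && in_row M i c && in_row M k c]|.
End Defs.

(* Main.v *)
Require Import Defs.
From mathcomp Require Import all_boot all_order all_algebra.
From mathcomp Require Import zify.

Theorem claim2 (q s : nat) (C : finType) (M : 'M[C]_(6, q)) (i k : 'I_6) :
  7 <= q -> 1 <= s <= 7 -> #|C| = 2 * q + s -> in_M M ->
  i != k -> 1 <= r M i k ->
  r M i k + r3 M i k <= 8 - s.
Proof.
move=> hq /andP[hs1 hs7] hC [rowinj [colinj cov]] hik hr.
have hr' := hr.
case/card_gt0P: hr' => c; rewrite inE => /andP[/andP[fc2 /existsP[j1 /eqP cj1]] /existsP[j2 /eqP cj2]].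
pose f := fun p : 'I_6 * 'I_q => M p.1 p.2.
pose a := (i, j1). pose b := (k, j2).
have ab : a != b by rewrite /a /b xpair_eqE negb_and hik.
have Fc : [set p : 'I_6 * 'I_q | M p.1 p.2 == c] = [set a; b].
  apply/eqP; rewrite eq_sym eqEcard; apply/andP; split.
    apply/subsetP => p; rewrite !inE => /orP[] /eqP -> /=; apply/eqP; [exact cj1| exact cj2].
  rewrite cards2 ab. by move: fc2; rewrite /freq => /eqP ->.
have cpos : forall x y, M x y = c -> (x = i) \/ (x = k).
  move=> x y h. have : (x,y) \in [set p : 'I_6 * 'I_q | M p.1 p.2 == c] by rewrite inE h.
  by rewrite Fc !inE /a /b !xpair_eqE => /orP[] /andP[/eqP -> _]; auto.
have cposc : forall x y, M x y = c -> (y = j1) \/ (y = j2).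
  move=> x y h. have : (x,y) \in [set p : 'I_6 * 'I_q | M p.1 p.2 == c] by rewrite inE h.
  by rewrite Fc !inE /a /b !xpair_eqE => /orP[] /andP[_ /eqP ->]; auto.
pose S := [set d | (d != c) && in_row M i d && in_row M k d].
have hrr : r M i k + r3 M i k <= #|S| + 1.
  rewrite /r /r3. set A := [set c0 | _ ]. set B := [set c0 | _].
  have : #|A :|: B| <= #|c |: S|.
    apply: subset_leq_card; apply/subsetP => d; rewrite !inE.
    move=> h; case: eqP => //= _; by case/orP: h => /andP[/andP[_ ->] ->].
  rewrite cardsU1 cardsU.
  have -> : A :&: B = set0.
    apply/setP => d; rewrite !inE; apply/negbTE; apply/negP.
    by case/andP => /andP[/andP[/eqP -> _] _] /andP[/andP[]].
  rewrite cards0 !inE eqxx /=. lia.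
pose J := [set j | M i j \in S].
pose T := [set (i, j) | j in J].
have hSJ : #|S| <= #|J|.
  have : S \subset [set M i j | j in J].
    apply/subsetP => d dS. have := dS; rewrite inE => /andP[/andP[_ /existsP[j /eqP hj]] _].
    apply/imsetP; exists j => //; by rewrite inE hj.
  move/subset_leq_card => h; apply: leq_trans h _; exact: leq_imset_card.
have hTJ : #|T| = #|J| by rewrite card_imset // => x y [].
pose Ri := [set (i, j) | j in [set: 'I_q]].
pose Rk := [set (k, j) | j in [set: 'I_q]].
pose K1 := [set (x, j1) | x in [set: 'I_6] :\ i :\ k].
pose K2 := [set (x, j2) | x in [set: 'I_6] :\ i :\ k].
pose V := Ri :|: Rk :|: K1 :|: K2.
have h4 : #|[set: 'I_6] :\ i :\ k| = 4.
  have := cardsD1 k ([set: 'I_6] :\ i). have := cardsD1 i [set: 'I_6].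
  rewrite !inE eq_sym hik cardsT card_ord /=. move=> H1 H2. by move: H1; rewrite H2 => -[].
have hV : #|V| <= 2 * q + 8.
  have hRi : #|Ri| = q by rewrite card_imset ?cardsT ?card_ord // => x y [].
  have hRk : #|Rk| = q by rewrite card_imset ?cardsT ?card_ord // => x y [].
  have hK1 : #|K1| <= 4 by apply: leq_trans (leq_imset_card _ _) _; rewrite h4.
  have hK2 : #|K2| <= 4 by apply: leq_trans (leq_imset_card _ _) _; rewrite h4.
  rewrite /V !cardsU. rewrite hRi hRk. move: hK1 hK2. set x1 := #|K1|. set x2 := #|K2|. set y1 := #|Ri :&: Rk|. set y2 := #|(Ri :|: Rk) :&: K1|. set y3 := #|_ :&: K2|. lia.
have inV : forall x y, (x == i) || (x == k) || (y == j1) || (y == j2) -> (x,y) \in V.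
  move=> x y h. rewrite /V !in_setU.
  case: (eqVneq x i) => [->|xi]. by rewrite (imset_f (fun j => (i, j))) ?inE.
  case: (eqVneq x k) => [->|xk]. by rewrite (imset_f (fun j => (k, j))) ?inE ?orbT.
  move: h; rewrite (negbTE xi) (negbTE xk) /= => /orP[] /eqP ->.
    by rewrite (imset_f (fun x => (x, j1))) ?orbT // !inE xi xk.
  by rewrite (imset_f (fun x => (x, j2))) ?orbT // !inE xi xk.
pose W := a |: (b |: T).
have bT : b \notin T.
  apply/imsetP => -[j _ [] ki _]. by rewrite ki eqxx in hik.
have aT : a \notin b |: T.
  rewrite in_setU1 negb_or ab /=. apply/imsetP => -[j] + /(congr1 snd) ej. rewrite /a /= in ej. by rewrite inE -ej cj1 inE eqxx.
have hW : #|W| = 2 + #|T| by rewrite /W !cardsU1 aT bT.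
have WV : W \subset V.
  apply/subsetP => p; rewrite /W !in_setU1 => /orP[/eqP ->|/orP[/eqP ->|/imsetP[j _ ->]]];
    rewrite /a /b; apply: inV; by rewrite eqxx ?orbT.
have Wcol : forall p, p \in W -> f p \in c |: S.
  move=> p; rewrite /W !in_setU1 => /orP[/eqP ->|/orP[/eqP ->|/imsetP[j hj ->]]].
  - by rewrite /f /= cj1 eqxx.
  - by rewrite /f /= cj2 eqxx.
  - by rewrite inE in hj; rewrite /f /= hj orbT.
have cover : [set: C] :\ c \subset [set f p | p in V :\: W].
  apply/subsetP => d; rewrite !inE => /andP[dc _].
  case: (boolP (d \in S)) => dS.
    have := dS; rewrite inE => /andP[_ /existsP[j /eqP hj]].
    apply/imsetP; exists (k, j); last by rewrite /f hj.
    rewrite inE inV ?eqxx ?orbT // andbT.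
    rewrite /W !inE negb_or; apply/andP; split.
      by rewrite /a xpair_eqE negb_and eq_sym hik.
    rewrite negb_or; apply/andP; split.
      rewrite /b xpair_eqE negb_and eqxx /=; apply/eqP => ej; move: hj; rewrite ej cj2 => ec.
      by rewrite ec eqxx in dc.
    apply/imsetP => -[j' _ [] ki _]; by rewrite ki eqxx in hik.
  have hsuff : forall p, p \in V -> f p = d -> d \in [set f p | p in V :\: W].
    move=> p pV fp; apply/imsetP; exists p; last by rewrite fp. rewrite inE pV andbT.
    apply/negP => /Wcol; rewrite fp in_setU1 (negbTE dS) orbF; by apply/negP.
  have cd : c != d by rewrite eq_sym.
  case: (cov c d cd) => [[x [y1 [y2 [h1 h2]]]] | [y [x1 [x2 [h1 h2]]]]].
    apply: (hsuff (x, y2)) => //; apply: inV; case: (cpos x y1 h1) => ->; by rewrite eqxx ?orbT.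
  apply: (hsuff (x2, y)) => //; apply: inV; case: (cposc x1 y h1) => ->; by rewrite eqxx ?orbT.
have := subset_leq_card cover.
have := leq_imset_card f (V :\: W).
rewrite (cardsD V W) (setIidPr WV) hW hTJ.
have := cardsD1 c [set: C]. rewrite !inE cardsT hC.
move=> h1 h2 h3. move: h1 h2 h3 hV hrr hSJ hs7 hs1 => /=.
set X := #|[set: C] :\ c|. set Y := #|[set f x | x in V :\: W]|. set Z := #|V|.
set U := #|S|. set U2 := #|J|. set R := r M i k + r3 M i k. lia.
Qed.
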